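(* Let $G$ be a simple graph with $n$ vertices. Then $\gamma(G)=n-1$ if and only if $G$ is isomorphic to the path $P_n$ on $n$ vertices.
   Context: For a graph $G$ with vertex set $V$, let $X_G=\{x_u\mid u\in V\}$ be indeterminates and $L(G,X_G)$ the matrix with $L_{u,u}=x_u$ and $L_{u,v}=-m_{uv}$ ($u\neq v$), $m_{uv}$ the number of edges between $u$ and $v$. The $j$-critical ideal $I_j(G,X_G)\subseteq\mathbb{Z}[X_G]$ is generated by all $j\times j$ minors of $L(G,X_G)$. The algebraic co-rank is $\gamma(G)=\max\{j\mid I_j(G,X_G)=\mathbb{Z}[X_G]\}$. *)

(* Defs.v *)
From HB Require Import structures.
From mathcomp Require Import all_boot all_order all_fingroup all_algebra.
From mathcomp Require Import mpoly.
Set Implicit Arguments. Unset Strict Implicit. Unset Printing Implicit Defensive.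
Import Order.TTheory GRing.Theory Num.Theory.
Local Open Scope ring_scope.

Definition simple_graph (n : nat) (e : rel 'I_n) : Prop :=
  (forall u v, e u v = e v u) /\ (forall u, e u u = false).

Definition path_rel (n : nat) : rel 'I_n :=
  fun i j => ((i : nat).+1 == j) || ((j : nat).+1 == i).

Definition graph_iso (n : nat) (e e' : rel 'I_n) : Prop :=
  exists s : {perm 'I_n}, forall u v, e' (s u) (s v) = e u v.

Definition gen_laplacian (n : nat) (e : rel 'I_n) : 'M[{mpoly int[n]}]_n :=
  \matrix_(u, v) (if u == v then 'X_u else - ((e u v : nat)%:R)).

(* increasing maps 'I_j -> 'I_n: choices of j rows / columns *)
Definition incr_map (j n : nat) (f : {ffun 'I_j -> 'I_n}) : bool :=
  [forall a : 'I_j, forall b : 'I_j, (a < b)%N ==> (f a < f b)%N].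

Definition minor (n j : nat) (M : 'M[{mpoly int[n]}]_n)
  (f g : {ffun 'I_j -> 'I_n}) : {mpoly int[n]} :=
  \det (\matrix_(a, b) M (f a) (g b)).

Definition in_critical_ideal (n : nat) (e : rel 'I_n) (j : nat)
  (p : {mpoly int[n]}) : Prop :=
  exists c : {ffun 'I_j -> 'I_n} * {ffun 'I_j -> 'I_n} -> {mpoly int[n]},
    p = \sum_(fg | incr_map fg.1 && incr_map fg.2)
          c fg * minor (gen_laplacian e) fg.1 fg.2.

Definition critical_ideal_trivial (n : nat) (e : rel 'I_n) (j : nat) : Prop :=
  forall p : {mpoly int[n]}, in_critical_ideal e j p.

Definition is_algebraic_corank (n : nat) (e : rel 'I_n) (g : nat) : Prop :=
  critical_ideal_trivial e g /\
  forall j, critical_ideal_trivial e j -> (j <= g)%N.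

(* Main.v *)
Require Import Defs.
From mathcomp Require Import all_boot all_order all_fingroup all_algebra.
From mathcomp Require Import mpoly.
From Stdlib Require Import Classical.
From mathcomp Require Import ring zify.
Set Implicit Arguments. Unset Strict Implicit. Unset Printing Implicit Defensive.
Import GRing.Theory.
Local Open Scope ring_scope.

Section Comb.
Variable n : nat.
Implicit Types (S A : {set 'I_n}) (e : rel 'I_n).

Lemma F2_add_same (x : 'F_2) : x + x = 0.
Proof. by case: x => [[|[|m]] lt]; try exact: val_inj. Qed.
Lemma F2_opp (x : 'F_2) : - x = x.
Proof. by case: x => [[|[|m]] lt]; try exact: val_inj. Qed.
Lemma F2_addb (a b : bool) : ((a (+) b)%:R : 'F_2) = a%:R + b%:R.
Proof. by case: a; case: b; rewrite /= ?F2_add_same ?addr0 ?add0r. Qed.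
Lemma F2_neq0 (x : 'F_2) : x != 0 -> x = 1.
Proof. case: x => [[|[|m]] lt] //= _; exact: val_inj. Qed.

Definition nbrs S e u := [set w in S | (w != u) && e u w].
Definition deg S e u := #|nbrs S e u|.
Definition closedS S e A := forall u w, u \in A -> w \in S -> e u w -> w \in A.
Definition Conn S e := forall A, A \subset S -> closedS S e A -> A = set0 \/ A = S.
Definition Inv S e := [/\ Conn S e, (forall u, u \in S -> (deg S e u <= 2)%N) &
  (S = set0 \/ exists2 u, u \in S & (deg S e u <= 1)%N)].
Definition kern S e (d z : 'I_n -> 'F_2) := (forall u, u \notin S -> z u = 0) /\
  forall u, u \in S -> d u * z u + \sum_(w in S | w != u) (e u w)%:R * z w = 0.
Definition NonRigid S e := exists d z1 z2, [/\ kern S e d z1, kern S e d z2,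
  (exists u, z1 u != 0), (exists u, z2 u != 0) & (exists u, z1 u != z2 u)].
Definition lc e x : rel 'I_n := fun u w => e u w (+) (e u x && e w x).
Definition symr e := forall u w, e u w = e w u.

Lemma sum_nbrs S e u : \sum_(w in S | w != u) ((e u w)%:R : 'F_2) = (deg S e u)%:R.
Proof.
rewrite /deg /nbrs -sum1_card natr_sum [RHS]big_mkcond [LHS]big_mkcond /=.
apply: eq_bigr => w _; rewrite inE; case: (w \in S) => //=; case: (w != u) => //=.
by case: (e u w).
Qed.

Lemma closedC S e A : symr e -> A \subset S -> closedS S e A -> closedS S e (S :\: A).
Proof.
move=> sy sAS cA u w; rewrite !inE => /andP[uA uS] wS euw; rewrite wS andbT.
apply/negP => wA; move/negP: uA; apply; apply: (cA w u) => //; by rewrite sy.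
Qed.

Lemma kern_closed S e A : symr e -> A \subset S -> closedS S e A ->
  kern S e (fun u => (deg S e u)%:R) (fun u => (u \in A)%:R).
Proof.
move=> sy sAS cA; split.
  by move=> u uS; case uA: (u \in A) => //; move/negP: uS; case; exact: (subsetP sAS).
move=> u uS; case uA: (u \in A).
  rewrite mulr1 (eq_bigr (fun w => (e u w)%:R)) ?sum_nbrs ?F2_add_same //.
  move=> w /andP[wS _]; case euw: (e u w); last by rewrite mul0r.
  by rewrite (cA u w uA wS euw) mulr1.
rewrite mulr0 add0r big1 // => w /andP[wS _]; case wA: (w \in A); last by rewrite mulr0.
case euw: (e u w); last by rewrite mul0r.
by move: uA; rewrite (cA w u wA uS) // sy.
Qed.


Lemma F2_andb (a b : bool) : ((a && b)%:R : 'F_2) = a%:R * b%:R.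
Proof. by case: a; case: b; rewrite /= ?mulr1 ?mulr0 ?mul0r. Qed.
Lemma F2_sq (a : bool) : ((a%:R : 'F_2) * a%:R) = a%:R.
Proof. by case: a; rewrite /= ?mulr1 ?mulr0. Qed.

Lemma nonrigid_disconn S e : symr e -> ~ Conn S e -> NonRigid S e.
Proof.
move=> sy nC.
have [A [sAS cA A0 AS]] : exists A, [/\ A \subset S, closedS S e A, A <> set0 & A <> S].
  apply: NNPP => H; apply: nC => A sAS cA.
  case: (classic (A = set0)) => [->|A0]; first by left.
  case: (classic (A = S)) => [->|AS]; first by right.
  by case: H; exists A.
exists (fun u => (deg S e u)%:R), (fun u => (u \in A)%:R), (fun u => (u \in S :\: A)%:R).
have [a aA] : exists a, a \in A by apply/set0Pn/eqP.
have [b bS bA] : exists2 b, b \in S & b \notin A.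
  apply: NNPP => H; apply: AS; apply/eqP; rewrite eqEsubset sAS /=.
  apply/subsetP => b bS; apply: NNPP => bA; apply: H; by exists b => //; apply/negP.
split.
- exact: kern_closed.
- apply: kern_closed => //; first exact: subsetDl. exact: closedC.
- by exists a; rewrite aA.
- by exists b; rewrite inE bS bA.
- by exists a; rewrite aA inE aA.
Qed.

Lemma ext_nonrigid S e x : symr e -> x \in S -> NonRigid (S :\ x) (lc e x) -> NonRigid S e.
Proof.
move=> sy xS [d [z1 [z2 [k1 k2 nz1 nz2 nz12]]]].
pose d' u : 'F_2 := if u == x then 1 else d u + (e u x)%:R.
pose ext (z : 'I_n -> 'F_2) u := if u == x then \sum_(w in S | w != x) (e x w)%:R * z w else z u.
have kext z : kern (S :\ x) (lc e x) d z -> kern S e d' (ext z).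
  move=> [kz0 kz]; split.
    move=> u uS; rewrite /ext; case: eqP => [ux|_]; first by move: uS; rewrite ux xS.
    by apply: kz0; rewrite inE (negbTE uS) andbF.
  move=> u uS; rewrite /d' /ext; case: (eqVneq u x) => [->|ux].
    rewrite ?eqxx mul1r [X in _ + X](eq_bigr (fun w => (e x w)%:R * z w)); first exact: F2_add_same.
    by move=> w /andP[_ /negbTE ->].
  have H1 : \sum_(w in S | w != u) (e u w)%:R * (if w == x then \sum_(w0 in S | w0 != x) (e x w0)%:R * z w0 else z w)
     = (e u x)%:R * \sum_(w0 in S | w0 != x) (e x w0)%:R * z w0 + \sum_(w in S :\ x | w != u) (e u w)%:R * z w.
    rewrite (bigD1 x) /=; last by rewrite xS eq_sym ux.
    rewrite eqxx; congr (_ + _); apply: eq_big => [w|w /andP[_ /negbTE ->]] //.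
    by rewrite !inE; case: (w \in S); case: (w == x); case: (w == u).
  have H2 : \sum_(w0 in S | w0 != x) (e x w0)%:R * z w0 = (e x u)%:R * z u + \sum_(w in S :\ x | w != u) (e x w)%:R * z w.
    rewrite (bigD1 u) /=; last by rewrite uS ux.
    congr (_ + _); apply: eq_bigl => w.
    by rewrite !inE; case: (w \in S); case: (w == x); case: (w == u).
  have uS' : u \in S :\ x by rewrite !inE ux uS.
  move: (kz u uS'); rewrite ?(negbTE ux) H1 H2.
  rewrite (eq_bigr (fun w => ((e u w)%:R + (e u x)%:R * (e x w)%:R) * z w)); last first.
    by move=> w _; rewrite /lc F2_addb F2_andb (sy w x).
  rewrite (sy x u).
  set a : 'F_2 := (e u x)%:R.
  rewrite (eq_bigr (fun w => (e u w)%:R * z w + a * ((e x w)%:R * z w))); last by move=> w _; rewrite mulrDl mulrA.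
  rewrite big_split /= -mulr_sumr.
  set S1 := \sum_(_ in _ | _) _ * z _. set S2 := \sum_(_ in _ | _) _ * z _.
  move=> hyp.
  have -> : (d u + a) * z u + (a * (a * z u + S2) + S1) = (d u * z u + (S1 + a * S2)) + (a * z u + a * a * z u) by ring.
  by rewrite hyp add0r F2_sq F2_add_same.
have neq_ext z u : kern (S :\ x) (lc e x) d z -> z u != 0 -> ext z u = z u.
  move=> [kz0 _] nz; rewrite /ext; case: eqP => // ux; move: nz; rewrite kz0 ?eqxx //.
  by rewrite ux !inE eqxx.
exists d', (ext z1), (ext z2); split; [exact: kext | exact: kext | | | ].
- by case: nz1 => u nz; exists u; rewrite neq_ext.
- by case: nz2 => u nz; exists u; rewrite neq_ext.
- case: nz12 => u nz; exists u.
  have xn : x \notin S :\ x by rewrite !inE eqxx.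
  case: (eqVneq u x) => [ux|ux]; last by rewrite /ext (negbTE ux).
  by move: nz; rewrite ux (k1.1 x xn) (k2.1 x xn) eqxx.
Qed.
Lemma in_nbrs S e u w : (w \in nbrs S e u) = [&& w \in S, w != u & e u w].
Proof. by rewrite inE. Qed.

Lemma card_le_union (A B : {set 'I_n}) : (#|A :|: B| <= #|A| + #|B|)%N.
Proof. rewrite cardsU; exact: leq_subr. Qed.

Lemma deg_ge2 S e u a b : a != b -> a \in nbrs S e u -> b \in nbrs S e u -> (2 <= deg S e u)%N.
Proof.
move=> ab aN bN; have <- : #|[set a; b]| = 2%N by rewrite cards2 ab.
rewrite /deg; apply: subset_leq_card.
by apply/subsetP => w /set2P[]->.
Qed.

Lemma notInv_deg3 S e u : u \in S -> (2 < deg S e u)%N -> ~ Inv S e.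
Proof. move=> uS d3 [_ H _]; move: (H u uS); rewrite leqNgt d3. done. Qed.

Lemma notInv_all2 S e u : u \in S -> (forall v, v \in S -> 2 <= deg S e v)%N -> ~ Inv S e.
Proof.
move=> uS H [_ _ [S0|[v vS dv]]]; first by move: uS; rewrite S0 inE.
by move: (H v vS); rewrite leqNgt ltnS dv.
Qed.

Lemma notInv_iso S e u : u \in S -> deg S e u = 0%N -> (1 < #|S|)%N -> ~ Inv S e.
Proof.
move=> uS d0 cS [C _ _].
have sub : [set u] \subset S by rewrite sub1set.
have cl : closedS S e [set u].
  move=> a w; rewrite inE => /eqP -> wS euw; rewrite inE; apply: NNPP => wu.
  have : w \in nbrs S e u by rewrite in_nbrs wS euw andbT; apply/negP.
  by move/card0_eq: d0 => ->.
case: (C _ sub cl) => [/setP /(_ u)|Su]; first by rewrite !inE eqxx.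
by move: cS; rewrite -Su cards1.
Qed.

Lemma nbrs_lc_far S e x u : x != u -> ~~ e u x -> nbrs (S :\ x) (lc e x) u = nbrs S e u.
Proof.
move=> xu nux; apply/setP => w; rewrite !in_nbrs !inE /lc (negbTE nux) /= addbF.
case: (eqVneq w x) => [->|//]; by rewrite (negbTE nux) !andbF.
Qed.

Lemma symr_lc e x : symr e -> symr (lc e x).
Proof. by move=> sy u w; rewrite /lc sy andbC. Qed.
Lemma nbrs_eq2 S e u a b : a != b -> a \in nbrs S e u -> b \in nbrs S e u ->
  (deg S e u <= 2)%N -> nbrs S e u = [set a; b].
Proof.
move=> ab aN bN d2; apply/esym/eqP; rewrite eqEcard cards2 ab.
have -> : [set a; b] \subset nbrs S e u by apply/subsetP => w /set2P[]->.
done.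
Qed.

Lemma other_nbr S e u x : x \in nbrs S e u -> deg S e u = 2 ->
  exists a', [/\ a' \in nbrs S e u, a' != x & nbrs S e u = [set x; a']].
Proof.
move=> xN d2.
have : #|nbrs S e u :\ x| == 1%N by move: d2; rewrite /deg (cardsD1 x (nbrs S e u)) xN add1n => -[->].
case/cards1P => a' Ha'.
have a'N : a' \in nbrs S e u :\ x by rewrite Ha' inE.
move: (a'N); rewrite !inE => /andP[a'x _].
exists a'; split => //; first by move: a'N; rewrite inE => /andP[].
have a'N' : a' \in nbrs S e u by move: a'N; rewrite inE => /andP[].
by apply: nbrs_eq2; rewrite // ?d2 // eq_sym.
Qed.

Lemma caseA S e u x : u \in S -> (2 < deg S e u)%N -> x \in S -> x != u -> ~~ e u x ->
  ~ Inv (S :\ x) (lc e x).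
Proof.
move=> uS d3 xS xu nux; apply: (notInv_deg3 (u := u)); first by rewrite !inE eq_sym xu.
by rewrite /deg nbrs_lc_far.
Qed.

Lemma caseC_end S e x a b : symr e -> x \in S -> (forall v, v \in S -> deg S e v = 2) ->
  nbrs S e x = [set a; b] -> ~~ e a b -> (2 <= deg (S :\ x) (lc e x) a)%N.
Proof.
move=> sy xS d2 Nx nab.
have aN : a \in nbrs S e x by rewrite Nx !inE eqxx.
have bN : b \in nbrs S e x by rewrite Nx !inE eqxx orbT.
move: (aN) (bN); rewrite !in_nbrs => /and3P[aS ax xa] /and3P[bS bx xb].
have xNa : x \in nbrs S e a by rewrite in_nbrs xS sy xa eq_sym ax.
have [a' [a'N a'x Na]] := other_nbr xNa (d2 a aS).
move: (a'N); rewrite in_nbrs => /and3P[a'S a'a aa'].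
have a'b : a' != b by apply: contraNneq nab => <-.
have na'x : ~~ e a' x.
  apply/negP => ea'x.
  have : a' \in nbrs S e x by rewrite in_nbrs a'S a'x -sy ea'x.
  by rewrite Nx !inE (negbTE a'a) (negbTE a'b).
apply: (deg_ge2 a'b).
- by rewrite in_nbrs !inE a'x a'S a'a /lc aa' (negbTE na'x) andbF.
- have ab : a != b.
    apply/eqP => abeq; move: (d2 x xS); rewrite /deg Nx abeq.
    have -> : [set b; b] = [set b] by apply/setP => w; rewrite !inE orbb.
    by rewrite cards1.
  by rewrite in_nbrs !inE bx bS /lc (negbTE nab) (sy a x) xa (sy b x) xb eq_sym ab.
Qed.
Lemma caseC S e x : symr e -> x \in S -> (forall v, v \in S -> deg S e v = 2) ->
  ~ Inv (S :\ x) (lc e x).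
Proof.
move=> sy xS d2.
have /cards2P [a [b [ab Nx]]] : #|nbrs S e x| == 2%N by rewrite -/(deg S e x) d2.
have aN : a \in nbrs S e x by rewrite Nx !inE eqxx.
have bN : b \in nbrs S e x by rewrite Nx !inE eqxx orbT.
move: (aN) (bN); rewrite !in_nbrs => /and3P[aS ax xa] /and3P[bS bx xb].
have aS' : a \in S :\ x by rewrite !inE ax aS.
have bS' : b \in S :\ x by rewrite !inE bx bS.
case eab: (e a b).
  apply: (notInv_iso aS'); last first.
    have : [set a; b] \subset S :\ x by apply/subsetP => w /set2P[]->.
    by move/subset_leq_card; rewrite cards2 ab.
  apply/eqP; rewrite cards_eq0; apply/eqP/setP => w; rewrite in_nbrs !inE.
  have xNa : x \in nbrs S e a by rewrite in_nbrs xS sy xa eq_sym ax.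
  have bNa : b \in nbrs S e a by rewrite in_nbrs bS eab eq_sym ab.
  have xb' : x != b by rewrite eq_sym.
  have Na := nbrs_eq2 xb' xNa bNa (eq_leq (d2 a aS)).
  case: (eqVneq w x) => //= wx; case wS: (w \in S) => //=; case: (eqVneq w a) => //= wa.
  rewrite /lc (sy a x) xa /=.
  case: (eqVneq w b) => [->|wb]; first by rewrite eab (sy b x) xb.
  have -> : e a w = false.
    apply/negP => eaw; have : w \in nbrs S e a by rewrite in_nbrs wS wa eaw.
    by rewrite Na !inE (negbTE wx) (negbTE wb).
  have -> : e w x = false.
    apply/negP => ewx; have : w \in nbrs S e x by rewrite in_nbrs wS wx sy ewx.
    by rewrite Nx !inE (negbTE wa) (negbTE wb).
  done.
apply: (notInv_all2 aS') => v; rewrite !inE => /andP[vx vS].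
case: (eqVneq v a) => [->|va]; first by apply: (caseC_end sy xS d2 Nx); rewrite eab.
case: (eqVneq v b) => [->|vb].
  by apply: (caseC_end sy xS d2 (etrans Nx (setUC _ _))); rewrite sy eab.
have nvx : ~~ e v x.
  apply/negP => evx; have : v \in nbrs S e x by rewrite in_nbrs vS vx sy evx.
  by rewrite Nx !inE (negbTE va) (negbTE vb).
by rewrite /deg nbrs_lc_far ?(eq_sym x) // -/(deg S e v) d2.
Qed.
Lemma ar1 a : (3 < a)%N -> (1 < a - 1)%N. Proof. lia. Qed.
Lemma ar2 a b : (a - 1 = b.+1)%N -> (a - 2 = b)%N. Proof. lia. Qed.
Lemma ar3 a : (3 < a)%N -> (0 < a - 1)%N. Proof. lia. Qed.
Lemma ar4 a d' dg k : dg = k.+1 -> (a - 2 <= d' + (dg - 1))%N -> (d' <= 1)%N -> (3 < a)%N -> (0 < k)%N.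
Proof. lia. Qed.
Lemma ar5 a d' dg : (a - 2 <= d' + (dg - 1))%N -> (dg <= 2)%N -> (d' <= 1)%N -> (3 < a)%N -> a = 4%N.
Proof. lia. Qed.
Lemma ar6 b c : (4 - 1 = 1 + b)%N -> (b = 1 + c)%N -> c == 1%N. Proof. move=> h1 h2; apply/eqP; lia. Qed.

Lemma deg_lt S e u : u \in S -> (deg S e u < #|S|)%N.
Proof.
move=> uS; rewrite (cardsD1 u S) uS add1n ltnS /deg; apply: subset_leq_card.
by apply/subsetP => w; rewrite in_nbrs !inE => /and3P[-> -> _].
Qed.

Lemma lc_nbr S e t a b : a \in S :\ t -> b \in S :\ t -> a != b -> e a b ->
  (~~ e a t || ~~ e b t) -> b \in nbrs (S :\ t) (lc e t) a.
Proof.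
move=> aS bS ab eab H; rewrite in_nbrs bS eq_sym ab /lc eab /=.
by case: (e a t) H => //= ->.
Qed.

Lemma caseB S e u : symr e -> u \in S -> (2 < deg S e u)%N ->
  (forall v y, v \in S -> (2 < deg S e v)%N -> y \in S -> y != v -> e v y) ->
  exists2 x, x \in S & ~ Inv (S :\ x) (lc e x).
Proof.
move=> sy uS d3 dom.
have S4 : (3 < #|S|)%N by apply: leq_trans (deg_lt e uS).
have cSu : #|S :\ u| = (#|S| - 1)%N by rewrite (cardsD1 u S) uS add1n subn1.
have lcu v w : v \in S :\ u -> w \in S :\ u -> lc e u v w = ~~ e v w.
  rewrite !inE => /andP[vu vS] /andP[wu wS].
  by rewrite /lc (sy v u) (dom u v) // (sy w u) (dom u w) // addbT.
case: (classic (exists2 v, v \in S :\ u & (2 < deg S e v)%N)) => [[v vS dv]|].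
  exists u => //; apply: (notInv_iso vS); last by rewrite cSu; exact: ar1.
  apply/eqP; rewrite cards_eq0; apply/eqP/setP => w; rewrite [RHS]inE.
  apply/negP; rewrite in_nbrs => /and3P[wS wv]; rewrite lcu //.
  move: vS wS; rewrite !inE => /andP[_ vS] /andP[_ wS].
  by rewrite (dom v w).
move=> nB.
have d2 v : v \in S :\ u -> (deg S e v <= 2)%N.
  by move=> vS; rewrite leqNgt; apply/negP => dv; apply: nB; exists v.
have key v : v \in S :\ u -> (#|S| - 2 <= deg (S :\ u) (lc e u) v + (deg S e v - 1))%N.
  move=> vS; move: (vS); rewrite !inE => /andP[vu vS0].
  have uNv : u \in nbrs S e v by rewrite in_nbrs uS eq_sym vu sy (dom u v uS d3 vS0 vu).
  have -> : (deg S e v - 1 = #|nbrs S e v :\ u|)%N by rewrite /deg (cardsD1 u (nbrs S e v)) uNv add1n subn1.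
  have -> : (#|S| - 2 = #|S :\ u :\ v|)%N by apply: ar2; have := cardsD1 v (S :\ u); rewrite vS cSu add1n.
  apply: leq_trans (card_le_union _ _); apply: subset_leq_card; apply/subsetP => w.
  move=> /setD1P [wv /setD1P [wu wS]]; rewrite in_setU; apply/orP.
  have wS' : w \in S :\ u by rewrite in_setD1 wu wS.
  case evw: (e v w); [right | left].
    by rewrite in_setD1 wu in_nbrs wS wv evw.
  by rewrite in_nbrs wS' wv lcu ?evw.
have [v0 v0S] : exists v, v \in S :\ u.
  apply/set0Pn; rewrite -card_gt0 cSu; exact: ar3.
case: (classic (forall v, v \in S :\ u -> (2 <= deg (S :\ u) (lc e u) v)%N)) => [H|].
  by exists u => //; apply: (notInv_all2 v0S).
move=> H0. have [v Hv] := not_all_ex_not _ _ H0. have [vS nd] := imply_to_and _ _ Hv.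
have dv' : (deg (S :\ u) (lc e u) v <= 1)%N by rewrite leqNgt; apply/negP.
have := key v vS; have := d2 v vS => dv kv.
move: (vS); rewrite in_setD1 => /andP[vu vS0].
have uNv : u \in nbrs S e v by rewrite in_nbrs uS eq_sym vu sy (dom u v uS d3 vS0 vu).
have c1 : (0 < #|nbrs S e v :\ u|)%N.
  have := cardsD1 u (nbrs S e v); rewrite uNv add1n -/(deg S e v) => hc; exact: ar4 hc kv dv' S4.
have [w] := set0Pn _ (eqbLR (card_gt0 _) c1).
rewrite in_setD1 => /andP[wu wNv].
move: (wNv); rewrite in_nbrs => /and3P[wS wv evw].
have wS' : w \in S :\ u by rewrite in_setD1 wu wS.
have c4 : #|S| = 4%N by exact: ar5 kv dv dv' S4.
have vw : v != w by rewrite eq_sym.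
have vS'' : v \in S :\ u :\ w by rewrite !in_setD1 vw vu vS0.
have : #|S :\ u :\ w :\ v| == 1%N.
  have := cardsD1 v (S :\ u :\ w); have := cardsD1 w (S :\ u); rewrite wS' vS'' cSu c4.
  by move=> h1 h2; apply: ar6 h1 h2.
case/cards1P => t Ht.
have tS : t \in S :\ u :\ w :\ v by rewrite Ht inE.
move: (tS); rewrite !in_setD1 => /and4P[tv tw tu tS0].
have Nv : nbrs S e v = [set u; w] by apply: nbrs_eq2; rewrite // eq_sym.
have vNw : v \in nbrs S e w by rewrite in_nbrs vS0 vw sy evw.
have uNw : u \in nbrs S e w by rewrite in_nbrs uS eq_sym wu sy (dom u w uS d3 wS wu).
have Nw : nbrs S e w = [set u; v] by apply: nbrs_eq2; rewrite // ?d2 // eq_sym.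
have nvt : ~~ e v t.
  apply/negP => evt; have : t \in nbrs S e v by rewrite in_nbrs tS0 tv evt.
  by rewrite Nv !inE (negbTE tu) (negbTE tw).
have nwt : ~~ e w t.
  apply/negP => ewt; have : t \in nbrs S e w by rewrite in_nbrs tS0 tw ewt.
  by rewrite Nw !inE (negbTE tu) (negbTE tv).
have euv : e u v by rewrite (dom u v uS d3 vS0 vu).
have euw : e u w by rewrite (dom u w uS d3 wS wu).
have uT : u \in S :\ t by rewrite in_setD1 eq_sym tu uS.
have vT : v \in S :\ t by rewrite in_setD1 eq_sym tv vS0.
have wT : w \in S :\ t by rewrite in_setD1 eq_sym tw wS.
have uv : u != v by rewrite eq_sym.
have uw : u != w by rewrite eq_sym.
exists t => //; apply: (notInv_all2 uT) => y yT.
have : y \in [set u; v; w].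
  apply: NNPP => yn; move: yT; rewrite in_setD1 => /andP[yt yS].
  have : y \in S :\ u :\ w :\ v.
    rewrite !in_setD1 yS andbT; apply/and3P; split; apply/eqP => h; apply: yn;
    by rewrite h !inE eqxx ?orbT.
  by rewrite Ht inE (negbTE yt).
rewrite !inE => /orP[/orP[]|] /eqP ->.
- by apply: (deg_ge2 vw); apply: lc_nbr => //; rewrite ?nvt ?nwt ?orbT.
- by apply: (deg_ge2 uw); apply: lc_nbr => //; rewrite ?(sy v u) ?nvt ?orbT.
- by apply: (deg_ge2 uv); apply: lc_nbr => //; rewrite ?(sy w u) ?(sy w v) ?nvt ?nwt ?orbT.
Qed.
Lemma Qlem S e : symr e -> Conn S e -> (2 < #|S|)%N -> ~ Inv S e ->
  exists2 x, x \in S & ~ Inv (S :\ x) (lc e x).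
Proof.
move=> sy C c3 nI.
case: (classic (exists u, [/\ u \in S, (2 < deg S e u)%N & exists x, [/\ x \in S, x != u & ~~ e u x]])).
  move=> [u [uS du [x [xS xu nux]]]]; exists x => //; exact: (caseA uS du xS xu nux).
move=> nA.
have dom v y : v \in S -> (2 < deg S e v)%N -> y \in S -> y != v -> e v y.
  move=> vS dv yS yv; apply: NNPP => nvy; apply: nA; exists v; split => //.
  by exists y; split => //; apply/negP.
case: (classic (exists2 u, u \in S & (2 < deg S e u)%N)) => [[u uS du]|nB].
  exact: (caseB sy uS du dom).
have d2 v : v \in S -> (deg S e v <= 2)%N.
  by move=> vS; rewrite leqNgt; apply/negP => dv; apply: nB; exists v.
have [x xS] : exists x, x \in S by apply/set0Pn; rewrite -card_gt0; lia.
exists x => //; apply: caseC => // v vS; apply/eqP; rewrite eqn_leq d2 //=.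
rewrite ltnNge; apply/negP => dv; apply: nI; split => //; right; by exists v.
Qed.

Lemma small_inv S e : Conn S e -> (#|S| <= 2)%N -> Inv S e.
Proof.
move=> C c2; split => //.
  by move=> u uS; have := deg_lt e uS; lia.
case: (set_0Vmem S) => [->|[u uS]]; [by left | right; exists u => //].
by have := deg_lt e uS; lia.
Qed.

Lemma core k : forall S e, (#|S| <= k)%N -> symr e -> Inv S e \/ NonRigid S e.
Proof.
elim: k => [|k IH] S e cS sy;
  (case: (classic (Conn S e)) => C; last by right; exact: nonrigid_disconn);
  (case: (leqP #|S| 2) => c2; first by left; exact: small_inv).
  lia.
case: (classic (Inv S e)) => I; first by left.
right; have [x xS nI] := Qlem sy C c2 I.
apply: (ext_nonrigid sy xS).
have : (#|S :\ x| <= k)%N by have := cardsD1 x S; rewrite xS; lia.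
by move/IH => /(_ _ (symr_lc x sy)) [].
Qed.
Lemma ar7 a b c : (a <= b)%N -> c = b.+1 -> (c <= 2)%N -> (a <= 1)%N. Proof. lia. Qed.
Lemma conn_leaf S e x y : symr e -> Conn S e -> x \in S -> nbrs S e x = [set y] -> Conn (S :\ x) e.
Proof.
move=> sy C xS Nx A sA cA.
have yN : y \in nbrs S e x by rewrite Nx inE.
move: (yN); rewrite in_nbrs => /and3P[yS yx exy].
have Ax : x \notin A by apply/negP => /(subsetP sA); rewrite !inE eqxx.
have AS : A \subset S by apply: subset_trans sA (subsetDl _ _).
case yA: (y \in A).
  have sB : x |: A \subset S by rewrite subUset sub1set xS AS.
  have cB : closedS S e (x |: A).
    move=> u w; rewrite in_setU1 => /orP[/eqP->|uA] wS euw; rewrite in_setU1.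
      case: (eqVneq w x) => //= wx.
      have : w \in nbrs S e x by rewrite in_nbrs wS wx euw.
      by rewrite Nx inE => /eqP->.
    case: (eqVneq w x) => //= wx; apply: (cA u w uA) => //; by rewrite in_setD1 wx wS.
  case: (C _ sB cB) => [/setP/(_ x)|HB]; first by rewrite !inE eqxx.
  right; apply/eqP; rewrite eqEsubset sA /=; apply/subsetP => v; rewrite in_setD1 => /andP[vx vS].
  by move: vS; rewrite -HB in_setU1 (negbTE vx).
have cA' : closedS S e A.
  move=> u w uA wS euw; case: (eqVneq w x) => [wx|wx]; last first.
    by apply: (cA u w uA) => //; rewrite in_setD1 wx wS.
  move: (subsetP sA u uA); rewrite in_setD1 => /andP[ux uS].
  have : u \in nbrs S e x by rewrite in_nbrs uS ux sy -wx euw.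
  by rewrite Nx inE => /eqP uy; rewrite uy yA in uA.
case: (C _ AS cA') => [->|AS']; first by left.
by move: Ax; rewrite AS' xS.
Qed.

Lemma walk k : forall S e x, symr e -> #|S| = k.+1 -> Conn S e ->
  (forall u, u \in S -> (deg S e u <= 2)%N) -> x \in S -> (deg S e x <= 1)%N ->
  exists p : seq 'I_n, [/\ size p = k.+1, uniq p, nth x p 0 = x, (forall v, (v \in p) = (v \in S)) &
    forall i j, (i < k.+1)%N -> (j < k.+1)%N -> i != j ->
      e (nth x p i) (nth x p j) = (i.+1 == j) || (j.+1 == i)].
Proof.
elim: k => [|k IH] S e x sy cS C d2 xS dx.
  exists [:: x]; split => //.
    move=> v; rewrite inE; apply/eqP/idP => [->//|vS].
    have := cardsD1 x S; rewrite xS cS add1n => -[] /esym /cards0_eq S0.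
    by apply: NNPP => vx; move: S0 => /setP/(_ v); rewrite !inE vS; case: eqP.
  by case=> // [] [].
have dx1 : deg S e x = 1%N.
  apply/eqP; rewrite eqn_leq dx /= lt0n; apply/negP => /eqP d0.
  have sub : [set x] \subset S by rewrite sub1set.
  have cl : closedS S e [set x].
    move=> a w; rewrite inE => /eqP -> wS euw; rewrite inE; apply: NNPP => wu.
    have : w \in nbrs S e x by rewrite in_nbrs wS euw andbT; apply/negP.
    by move/card0_eq: d0 => ->.
  case: (C _ sub cl) => [/setP /(_ x)|Sx]; first by rewrite !inE eqxx.
  by move: cS; rewrite -Sx cards1.
have /cards1P [y Nx] : #|nbrs S e x| == 1%N by rewrite -/(deg S e x) dx1.
have yN : y \in nbrs S e x by rewrite Nx inE.
move: (yN); rewrite in_nbrs => /and3P[yS yx exy].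
have yS' : y \in S :\ x by rewrite in_setD1 yx yS.
have cS' : #|S :\ x| = k.+1 by have := cardsD1 x S; rewrite xS cS add1n => -[].
have C' := conn_leaf sy C xS Nx.
have sub' u : nbrs (S :\ x) e u \subset nbrs S e u.
  by apply/subsetP => w; rewrite !in_nbrs in_setD1 => /and3P[/andP[_ ->] -> ->].
have d2' u : u \in S :\ x -> (deg (S :\ x) e u <= 2)%N.
  move=> uS; apply: leq_trans (subset_leq_card (sub' u)) _; apply: d2.
  by move: uS; rewrite in_setD1 => /andP[].
have dy : (deg (S :\ x) e y <= 1)%N.
  have xNy : x \in nbrs S e y by rewrite in_nbrs xS eq_sym yx sy exy.
  have : nbrs (S :\ x) e y \subset nbrs S e y :\ x.
    apply/subsetP => w wN; rewrite in_setD1 (subsetP (sub' y) w wN) andbT.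
    by move: wN; rewrite in_nbrs in_setD1 => /andP[/andP[]].
  move/subset_leq_card; have := cardsD1 x (nbrs S e y); rewrite xNy add1n -/(deg S e y).
  have := d2 y yS; rewrite /deg => h1 h2 h3; exact: ar7 h3 h2 h1.
have [p [sp up hp mp ap]] := IH _ _ _ sy cS' C' d2' yS' dy.
have xp : x \notin p by rewrite mp !inE eqxx.
have ey v : v \in S :\ x -> e x v = (v == y).
  move=> vS; apply/idP/eqP => [exv|->//].
  have : v \in nbrs S e x by move: vS; rewrite in_nbrs in_setD1 => /andP[-> ->].
  by rewrite Nx inE => /eqP.
have nthp j : (j < k.+1)%N -> nth x (x :: p) j.+1 \in S :\ x.
  by move=> jk; rewrite /= -mp mem_nth // sp.
have nthy j : (j < k.+1)%N -> (nth x p j == y) = (j == 0)%N.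
  move=> jk; rewrite (set_nth_default y) ?sp // -[X in _ == X]hp nth_uniq ?sp //.
exists (x :: p); split.
- by rewrite /= sp.
- by rewrite /= xp up.
- by [].
- by move=> v; rewrite inE mp in_setD1; case: eqP => [->|]; rewrite ?xS.
- move=> [|i] [|j] //= ik jk ij.
  + rewrite ey; last exact: (nthp j jk).
    by rewrite nthy //; case: (j) => //.
  + rewrite sy ey; last exact: (nthp i ik).
    by rewrite nthy //; case: (i) => //.
  + by rewrite [nth x p i](set_nth_default y) ?sp // [nth x p j](set_nth_default y) ?sp // ap.
Qed.
End Comb.
Section Lin.
Variable n : nat.
Variable e : rel 'I_n.

Definition MF (d : 'I_n -> 'F_2) : 'M['F_2]_n := \matrix_(u, v) (if u == v then d u else (e u v)%:R).
Definition phi (d : 'I_n -> 'F_2) : {rmorphism {mpoly int[n]} -> 'F_2} := mmap (intr : {rmorphism int -> 'F_2}) d.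

Lemma eval_minor d j (f g : {ffun 'I_j -> 'I_n}) :
  phi d (minor (gen_laplacian e) f g) = \det (\matrix_(a, b) MF d (f a) (g b)).
Proof.
rewrite /minor /phi -det_map_mx; congr (\det _); apply/matrixP => a b; rewrite !mxE.
case: eqP => _; first by rewrite /= mmapX mmap1U.
by rewrite rmorphN rmorph_nat F2_opp.
Qed.

Lemma not_trivial_point j d :
  (forall f g : {ffun 'I_j -> 'I_n}, incr_map f -> incr_map g ->
      \det (\matrix_(a, b) MF d (f a) (g b)) = 0) ->
  ~ critical_ideal_trivial e j.
Proof.
move=> H tr; have [c] := tr 1; move/(congr1 (phi d)); rewrite rmorph1 rmorph_sum.
rewrite big1 ?oner_eq0 // => fg /andP[f1 f2]; rewrite rmorphM eval_minor H ?mulr0 //.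
Qed.

Lemma incr_inj j (f : {ffun 'I_j -> 'I_n}) : incr_map f -> injective f.
Proof.
move=> fi a b fab.
have H (x y : 'I_j) : (x < y)%N -> (f x < f y)%N.
  by move=> xy; move/forallP: fi => /(_ x) /forallP /(_ y) /implyP; apply.
apply: val_inj; apply/eqP; rewrite eqn_leq.
apply/andP; split; rewrite leqNgt; apply/negP => lt; move: (H _ _ lt); by rewrite fab ltnn.
Qed.

Lemma det_zero_kernel (M : 'M['F_2]_n) (z : 'I_n -> 'F_2) j (f g : 'I_j -> 'I_n) :
  (forall w, \sum_u z u * M u w = 0) -> injective f ->
  (forall u, u \notin [set f a | a in setT] -> z u = 0) -> (exists a, z (f a) != 0) ->
  \det (\matrix_(a, b) M (f a) (g b)) = 0.
Proof.
move=> kz fi zout [a0 nz]; apply/eqP/det0P; exists (\row_a z (f a)).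
  by apply/negP => /eqP/rowP/(_ a0); rewrite !mxE; apply/eqP.
apply/rowP => b; rewrite !mxE.
transitivity (\sum_u z u * M u (g b)); last exact: kz.
rewrite (bigID (fun u => u \in [set f a | a in setT])) /=.
rewrite [X in _ = _ + X]big1 ?addr0; last by move=> u /zout ->; rewrite mul0r.
rewrite big_imset /=; last by move=> x y _ _; apply: fi.
by apply: eq_big => [a|a _]; rewrite ?in_setT // !mxE.
Qed.

End Lin.
Lemma ar8 a b : (a.-1 + b = a)%N -> (0 < a)%N -> b = 1%N. Proof. lia. Qed.
Lemma ar9 j n : (n.-1 < j)%N -> (j <= n)%N -> j = n. Proof. lia. Qed.
Section Lin2.
Variable n : nat.
Variable e : rel 'I_n.

Lemma kern_full d z : symr e -> kern setT e d z -> forall w, \sum_u z u * MF e d u w = 0.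
Proof.
move=> sy [_ kz] w; rewrite -{2}(kz w (in_setT w)).
rewrite (bigD1 w) //= !mxE eqxx mulrC; congr (_ + _).
apply: eq_big => [u|u uw]; first by rewrite in_setT.
by rewrite !mxE (negbTE uw) sy mulrC.
Qed.

Lemma nonrigid_minors d z1 z2 : symr e -> kern setT e d z1 -> kern setT e d z2 ->
  (exists u, z1 u != 0) -> (exists u, z2 u != 0) -> (exists u, z1 u != z2 u) ->
  forall f g : {ffun 'I_n.-1 -> 'I_n}, incr_map f ->
  \det (\matrix_(a, b) MF e d (f a) (g b)) = 0.
Proof.
move=> sy k1 k2 [u1 nz1] nz2 [u12 nz12] f g fi.
have finj := incr_inj fi.
set Im := [set f a | a in setT].
have cIm : #|Im| = n.-1 by rewrite card_imset // cardsT card_ord.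
have n0 : (0 < n)%N by exact: leq_ltn_trans (leq0n _) (ltn_ord u1).
have : #|~: Im| == 1%N.
  by have := cardsC Im; rewrite cIm card_ord => hc; apply/eqP; exact: ar8 hc n0.
case/cards1P => r Hr.
have inIm u : u != r -> u \in Im.
  by move=> ur; apply: NNPP => /negP uI; move: ur; rewrite -in_set1 -Hr inE uI.
pose z := if z1 r == 0 then z1 else if z2 r == 0 then z2 else z1 \+ z2.
have kzz : forall w, \sum_u z u * MF e d u w = 0.
  move=> w; rewrite /z; case: eqP => _; first exact: kern_full.
  case: eqP => _; first exact: kern_full.
  rewrite /= (eq_bigr (fun u => z1 u * MF e d u w + z2 u * MF e d u w)).
    by rewrite big_split /= !kern_full // addr0.
  by move=> u _; rewrite mulrDl.
have zr : z r = 0.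
  rewrite /z; case: eqP => // /eqP a; case: eqP => // /eqP b.
  by rewrite /= (F2_neq0 a) (F2_neq0 b) F2_add_same.
have [u nzu] : exists u, z u != 0.
  rewrite /z; case: eqP => _; first by exists u1.
  case: eqP => _; first exact: nz2.
  exists u12 => /=; apply: contra nz12; rewrite addr_eq0 F2_opp => /eqP ->; done.
apply: (det_zero_kernel (z := z)) => //.
  by move=> w wI; have -> : w = r by apply/eqP; rewrite -in_set1 -Hr inE.
have uI : u \in Im by apply: inIm; apply: contra nzu => /eqP ->; rewrite zr.
by case/imsetP: uI => a _ ua; exists a; rewrite -ua.
Qed.

Lemma corank_bound j : symr e -> critical_ideal_trivial e j -> (j <= n.-1)%N.
Proof.
move=> sy tr; rewrite leqNgt; apply/negP => jn.
apply: (not_trivial_point (d := fun u => (deg setT e u)%:R)) tr => f g fi _.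
have finj := incr_inj fi.
have jle : (j <= n)%N by have := leq_card _ finj; rewrite !card_ord.
have jpos : (0 < j)%N by exact: leq_ltn_trans (leq0n _) jn.
pose a0 := Ordinal jpos.
have jn' : j = n by exact: ar9 jn jle.
have kz := kern_full sy (kern_closed sy (subxx setT) (fun u w _ wS _ => wS)).
apply: (det_zero_kernel (z := fun u => (u \in setT)%:R)) => //.
  have imT : [set f a | a in setT] = setT.
    apply/eqP; rewrite eqEcard subsetT /= (card_imset _ finj) !cardsT !card_ord.
    by rewrite jn'.
  by move=> u; rewrite imT in_setT.
by exists a0; rewrite in_setT oner_eq0.
Qed.

End Lin2.
Section PathMinor.
Variable m : nat.
Variable e : rel 'I_m.+1.
Variable s : {perm 'I_m.+1}.
Hypothesis iso : forall u v, path_rel (s u) (s v) = e u v.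

Let q := (s^-1)%g.
Let L := gen_laplacian e.

Lemma eq_q a b : e (q a) (q b) = path_rel a b.
Proof. by rewrite -iso /q !permKV. Qed.

Lemma lift_incr (h : 'I_m.+1) : incr_map [ffun a : 'I_m => lift h a].
Proof.
apply/forallP => a; apply/forallP => b; apply/implyP => ab; rewrite !ffunE /= /bump.
by case: (leqP h a); case: (leqP h b) => /=; lia.
Qed.

Definition T : 'M[{mpoly int[m.+1]}]_m := \matrix_(i, k) L (q (lift ord0 i)) (q (widen_ord (leqnSn m) k)).

Lemma detT : \det T = (-1) ^+ m.
Proof.
rewrite -det_tr det_trig.
  rewrite (eq_bigr (fun _ => -1)) ?prodr_const ?card_ord // => i _.
  rewrite !mxE (inj_eq (perm_inj (s := q))) -(inj_eq val_inj) /= /bump /= add1n.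
  by rewrite eqn_leq ltnn /= eq_q /path_rel /= /bump add1n eqxx orbT.
apply/forallP => i; apply/forallP => k; apply/implyP => ik.
have ne : (lift ord0 k == widen_ord (leqnSn m) i) = false.
  apply/eqP => /(congr1 (@nat_of_ord _)); rewrite lift0 /= => h; rewrite -h ltnNge leqnSn in ik; done.
rewrite !mxE (inj_eq (perm_inj (s := q))) ne eq_q /path_rel lift0 /=.
have -> : (k.+2 == i) = false.
  by apply/eqP => h; rewrite -h in ik; rewrite ltnNge (leq_trans (leqnSn k) (leqnSn _)) in ik.
have -> : (i.+1 == k.+1) = false by rewrite eqSS; apply/eqP => h; rewrite h ltnn in ik.
by rewrite oppr0.
Qed.


Lemma path_minor : exists f g : {ffun 'I_m -> 'I_m.+1},
  [/\ incr_map f, incr_map g & minor L f g * minor L f g = 1].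
Proof.
pose r0 := q ord0; pose c0 := q ord_max.
have sr0 : s r0 = ord0 by rewrite /r0 /q permKV.
have sc0 : s c0 = ord_max by rewrite /c0 /q permKV.
have rlt (a : 'I_m) : ((s (lift r0 a)).-1 < m)%N.
  have := ltn_ord (s (lift r0 a)); have := ltn_ord a; lia.
have glt (b : 'I_m) : (s (lift c0 b) < m)%N.
  have : s (lift c0 b) != ord_max by rewrite -sc0 (inj_eq perm_inj) eq_sym neq_lift.
  rewrite -(inj_eq val_inj) /=; have := ltn_ord (s (lift c0 b)); lia.
have rne (a : 'I_m) : (s (lift r0 a) : nat) != 0%N.
  by have : s (lift r0 a) != ord0 by rewrite -sr0 (inj_eq perm_inj) eq_sym neq_lift.
pose rho a := Ordinal (rlt a).
pose gam b := Ordinal (glt b).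
have lrho a : lift ord0 (rho a) = s (lift r0 a).
  apply: val_inj => /=; rewrite /bump /= add1n; have := rne a; lia.
have wgam b : widen_ord (leqnSn m) (gam b) = s (lift c0 b) by apply: val_inj.
have rinj : injective rho.
  move=> a b /(congr1 (lift ord0)); rewrite !lrho => /perm_inj; exact: lift_inj.
have ginj : injective gam.
  move=> a b /(congr1 (widen_ord (leqnSn m))); rewrite !wgam => /perm_inj; exact: lift_inj.
exists [ffun a => lift r0 a], [ffun b => lift c0 b]; split; try exact: lift_incr.
have -> : minor L [ffun a => lift r0 a] [ffun b => lift c0 b] =
    \det (row_perm (perm rinj) (col_perm (perm ginj) T)).
  rewrite /minor; congr (\det _); apply/matrixP => a b; rewrite !mxE !ffunE (permE rinj) (permE ginj).
  have qs x : q (s x) = x by rewrite /q permK.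
  by rewrite lrho wgam !qs.
rewrite row_permE col_permE !det_mulmx !det_perm detT.
set x := (-1) ^+ _; set y := (-1) ^+ _; set z := (-1) ^+ _.
have sq (k : nat) : ((-1) ^+ k : {mpoly int[m.+1]}) * (-1) ^+ k = 1 by rewrite -expr2 sqrr_sign.
have -> : x * (y * z) * (x * (y * z)) = (x * x) * (y * y) * (z * z) by ring.
by rewrite !sq !mulr1.
Qed.

End PathMinor.
Lemma trivial_of_minor n (e : rel 'I_n) j (f g : {ffun 'I_j -> 'I_n}) :
  incr_map f -> incr_map g ->
  minor (gen_laplacian e) f g * minor (gen_laplacian e) f g = 1 -> critical_ideal_trivial e j.
Proof.
move=> fi gi sq p; exists (fun fg => if fg == (f, g) then p * minor (gen_laplacian e) f g else 0).
rewrite (bigD1 (f, g)) /=; last by rewrite fi gi.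
rewrite eqxx big1 ?addr0; first by rewrite -mulrA sq mulr1.
by move=> fg /andP[_ /negbTE ->]; rewrite mul0r.
Qed.

Lemma trivial0 n (e : rel 'I_n) : critical_ideal_trivial e 0.
Proof.
have c0 : #|'I_0| = 0%N by rewrite card_ord.
have i0 : incr_map (ffun0 c0 : {ffun 'I_0 -> 'I_n}) by apply/forallP => [[]].
apply: (trivial_of_minor i0 i0).
by rewrite /minor det_mx00 mulr1.
Qed.

Local Close Scope ring_scope.
Unset Implicit Arguments.

Theorem corollary3p9 (n : nat) (e : rel 'I_n) :
  simple_graph e ->
  (is_algebraic_corank e (n - 1) <-> graph_iso e (@path_rel n)).
Proof.
move=> [sy irr]; split.
  move=> [tr _]; case: n e sy irr tr => [|k] e sy irr tr.
    by exists 1%g => [[]].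
  rewrite subn1 /= in tr.
  case: (core (leqnn #|[set: 'I_k.+1]|) sy) => [[C d2 [T0|[x _ dx]]]|[d [z1 [z2 [k1 k2 n1 n2 n12]]]]].
  - by move: (in_setT (ord0 : 'I_k.+1)); rewrite T0 inE.
  - have cT : #|[set: 'I_k.+1]| = k.+1 by rewrite cardsT card_ord.
    have [p [sp up hp mp ap]] := walk sy cT C d2 (in_setT x) dx.
    have ilt (u : 'I_k.+1) : (index u p < k.+1)%N by have := index_mem u p; rewrite mp in_setT sp.
    pose sig u := Ordinal (ilt u).
    have nth_sig u : nth x p (sig u) = u by rewrite nth_index // mp in_setT.
    have sinj : injective sig.
      by move=> u v /(congr1 (fun i : 'I_k.+1 => nth x p i)); rewrite !nth_sig.
    exists (perm sinj) => u v; rewrite !permE.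
    case: (eqVneq u v) => [->|uv].
      have h (t : nat) : (t.+1 == t) = false by elim: t.
      by rewrite irr /path_rel /= h.
    rewrite -{2}(nth_sig u) -{2}(nth_sig v) ap //.
    by apply: contra uv => /eqP /val_inj H; rewrite -(nth_sig u) H nth_sig.
  - exfalso; apply: (not_trivial_point (d := d)) tr => f g fi _.
    exact: (nonrigid_minors sy k1 k2 n1 n2 n12).
move=> [s iso]; split; last first.
  by move=> j /(corank_bound sy); rewrite subn1.
case: n e sy irr s iso => [|m] e sy irr s iso; first exact: trivial0.
rewrite subn1 /=.
have [f [g [fi gi sq]]] := path_minor iso.
exact: trivial_of_minor fi gi sq.
Qed.
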